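(* Let $(u,z,\mathcal R)$ be a (sufficiently regular) solution of the linearized system \[ \partial_tu=\bar\kappa\Delta_yu-\Big(1-\frac1\gamma\Big)\dot z,\ \ u(1,t)=0,\qquad z=\frac1{R_gT_\infty}\Big(-\frac{2\sigma}{R_*^2}\mathcal R+\frac{4\mu_l}{R_*}\dot{\mathcal R}+\rho_lR_*\ddot{\mathcal R}\Big),\qquad \int_{B_1}u\,dx=-\frac{4\pi}3z-4\pi\frac{\rho_*}{R_*}\mathcal R. \] Then, with \[ \mathcal E^L_{\rm total}=-4\pi\sigma\mathcal R^2-4\pi R_gT_\infty R_*^2\mathcal Rz-\frac{2\pi R_gT_\infty R_*^3}{3\rho_*}z^2+\frac{c_v\gamma T_\infty R_*^3}{2\rho_*}\int_{B_1}u^2dx+2\pi\rho_lR_*^3\dot{\mathcal R}^2, \] one has \[ \frac{d}{dt}\mathcal E^L_{\rm total}=-\frac{\kappa T_\infty}{\rho_*^2}R_*\int_{B_1}|\nabla_yu|^2dx-16\pi\mu_lR_*\dot{\mathcal R}^2. \]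
   Context: Parameters: $\kappa>0$, $\gamma>1$, $c_v>0$, $R_g>0$ with $c_p=\gamma c_v=c_v+R_g$; $T_\infty>0$, $p_{\infty,*}>0$, $\sigma>0$, $\mu_l\ge0$, $\rho_l>0$; $\rho_*,R_*>0$ with $R_gT_\infty\rho_*=p_{\infty,*}+2\sigma/R_*$; $\bar\kappa=\kappa/(c_p\rho_*R_*^2)$. $B_1$ is the unit ball of $\mathbb R^3$, $u(y,t)$ is identified with the radial function $u(|x|,t)$, $\Delta_y$ the radial Laplacian $y^{-2}\partial_y(y^2\partial_y)$ and $\nabla_y$ the gradient in $x$. *)

(* Defs.v *)
From Stdlib Require Import Reals.
From Coquelicot Require Import Coquelicot.
Open Scope R_scope.

(* Integral over the unit ball B_1 of R^3 of the radial function x |-> f(|x|),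
   written in spherical coordinates: 4 pi * int_0^1 f(y) y^2 dy. *)
Definition ball_int (f : R -> R) : R :=
  4 * PI * RInt (fun y => f y * y ^ 2) 0 1.

Definition radial_laplacian (w : R -> R) (y : R) : R :=
  / (y ^ 2) * Derive (fun s => s ^ 2 * Derive w s) y.

Definition radial_grad_sq (w : R -> R) (y : R) : R := (Derive w y) ^ 2.

(* Main.v *)
Require Import Defs.
From Stdlib Require Import Reals.
From Coquelicot Require Import Coquelicot.
From Stdlib Require Import Lra.
Open Scope R_scope.

Lemma c2d_swap f x y : continuity_2d_pt f x y -> continuity_2d_pt (fun a b => f b a) y x.
Proof.
intros H eps. destruct (H eps) as [d Hd]. exists d. intros a b Ha Hb. now apply Hd.
Qed.

Lemma cont_to_c2d (f : R -> R -> R) x y :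
  continuous (fun p : R * R => f (fst p) (snd p)) (x, y) -> continuity_2d_pt f x y.
Proof. intros H. now apply continuity_2d_pt_filterlim. Qed.

Lemma cont_slice (f : R -> R -> R) x y :
  continuous (fun p : R * R => f (fst p) (snd p)) (x, y) -> continuous (fun a => f a y) x.
Proof.
intros H. apply (continuous_comp_2 (fun a => a) (fun _ => y) f).
apply continuous_id. apply continuous_const. exact H.
Qed.

Lemma loc_interval ta tb t : ta < t < tb -> locally t (fun s => ta < s < tb).
Proof.
intros Ht. assert (Hd : 0 < Rmin (t - ta) (tb - t)) by (apply Rmin_pos; lra).
exists (mkposreal _ Hd). intros s Hs. unfold ball in Hs; simpl in Hs.
unfold AbsRing_ball, abs, minus, plus, opp in Hs; simpl in Hs.
pose proof (Rmin_l (t - ta) (tb - t)). pose proof (Rmin_r (t - ta) (tb - t)).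
apply Rabs_def2 in Hs. lra.
Qed.

Lemma loc2d_interval ta tb t y : ta < t < tb -> locally_2d (fun s (_ : R) => ta < s < tb) t y.
Proof.
intros Ht. assert (Hd : 0 < Rmin (t - ta) (tb - t)) by (apply Rmin_pos; lra).
exists (mkposreal _ Hd). intros s v Hs _. simpl in Hs.
pose proof (Rmin_l (t - ta) (tb - t)). pose proof (Rmin_r (t - ta) (tb - t)).
apply Rabs_def2 in Hs. lra.
Qed.

Lemma is_derive_eq (f : R -> R) x l l' : is_derive f x l -> l = l' -> is_derive f x l'.
Proof. intros H ->; exact H. Qed.

Lemma der_sq_c (g : R -> R) s d c : is_derive g s d ->
  is_derive (fun x => g x ^ 2 * c) s (2 * g s * d * c).
Proof.
intros H. assert (E : ex_derive g s) by (exists d; exact H).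
auto_derive. tauto. change (Derive (fun x => g x) s) with (Derive g s). rewrite (is_derive_unique _ _ _ H). ring.
Qed.

Lemma c2d_sq1 x y : continuity_2d_pt (fun a (_ : R) => a ^ 2) x y.
Proof.
apply continuity_2d_pt_ext with (f := fun a b => a * a). intros; simpl; ring.
apply continuity_2d_pt_mult; apply continuity_2d_pt_id1.
Qed.

Lemma cR_mult (f g : R -> R) x : continuous f x -> continuous g x -> continuous (fun y => f y * g y) x.
Proof. intros; apply (continuous_mult f g); auto. Qed.
Lemma cR_plus (f g : R -> R) x : continuous f x -> continuous g x -> continuous (fun y => f y + g y) x.
Proof. intros; apply (continuous_plus f g); auto. Qed.
Lemma cR_const (c x : R) : continuous (fun _ : R => c) x.
Proof. apply continuous_const. Qed.
Lemma cR_id (x : R) : continuous (fun y : R => y) x.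
Proof. apply continuous_id. Qed.
Lemma cR_sq (f : R -> R) x : continuous f x -> continuous (fun y => f y ^ 2) x.
Proof. intros H. apply continuous_ext with (f := fun y => f y * f y).
intros; simpl; ring. now apply cR_mult. Qed.

Lemma cR_der (f : R -> R) x l : is_derive f x l -> continuous f x.
Proof. intros H. apply (@ex_derive_continuous R_AbsRing R_NormedModule). exists l; exact H. Qed.

Ltac req := match goal with |- ?a = ?b => change (@eq R a b) end.
Lemma step1 (ta tb : R) (u uy ut : R -> R -> R)
  (Hu_y : forall y t, ta < t < tb -> is_derive (fun s => u s t) y (uy y t))
  (Hu_t : forall y t, ta < t < tb -> is_derive (fun s => u y s) t (ut y t))
  (Hu_cont : forall y t, ta < t < tb ->
     continuous (fun p : R * R => u (fst p) (snd p)) (y, t))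
  (Hut_cont : forall y t, ta < t < tb ->
     continuous (fun p : R * R => ut (fst p) (snd p)) (y, t))
  t (Ht : ta < t < tb) :
  is_derive (fun s => ball_int (fun y => u y s ^ 2)) t
    (4 * PI * RInt (fun y => 2 * u y t * ut y t * y ^ 2) 0 1).
Proof.
unfold ball_int.
assert (HD : forall s y, ta < s < tb ->
   is_derive (fun s0 => u y s0 ^ 2 * y ^ 2) s (2 * u y s * ut y s * y ^ 2)).
{ intros s y Hs. apply (der_sq_c (fun s0 => u y s0)). auto. }
assert (HDe : forall s y, ta < s < tb ->
   Derive (fun s0 => u y s0 ^ 2 * y ^ 2) s = 2 * u y s * ut y s * y ^ 2).
{ intros; apply is_derive_unique; auto. }
apply (is_derive_scal (fun s => RInt (fun y => u y s ^ 2 * y ^ 2) 0 1)).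
eapply is_derive_eq.
apply (is_derive_RInt_param (fun s y => u y s ^ 2 * y ^ 2)).
- apply (filter_imp (fun s => ta < s < tb)); [| now apply loc_interval].
  intros s Hs y _. eexists. apply HD; auto.
- intros y _. 
  apply continuity_2d_pt_ext_loc with (f := fun s y => 2 * u y s * ut y s * y ^ 2).
  + destruct (loc2d_interval ta tb t y Ht) as [d Hd]. exists d. intros a b Ha Hb.
    symmetry. apply HDe. now apply (Hd a b).
  + apply (c2d_swap (fun y s => 2 * u y s * ut y s * y ^ 2)).
    apply continuity_2d_pt_mult; [| apply c2d_sq1].
    apply continuity_2d_pt_mult; [| apply cont_to_c2d; auto].
    apply continuity_2d_pt_mult; [apply continuity_2d_pt_const | apply cont_to_c2d; auto].
- apply (filter_imp (fun s => ta < s < tb)); [| now apply loc_interval].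
  intros s Hs. apply (@ex_RInt_continuous R_CompleteNormedModule). intros y _.
  apply (cR_mult (fun y => u y s ^ 2) (fun y => y ^ 2)).
  apply (cR_sq (fun y => u y s)). apply (cont_slice u); auto.
  apply (cR_sq (fun y => y)). apply cR_id.
- apply RInt_ext. intros y _. apply HDe; auto.
Qed.
Lemma step2 (U Uy Uyy Ut : R -> R) (k c d : R) (Hk : k <> 0)
  (HU : forall y, is_derive U y (Uy y))
  (HUy : forall y, is_derive Uy y (Uyy y))
  (HUt : forall y, continuous Ut y)
  (Hbc : U 1 = 0)
  (Hpde : forall y, 0 < y <= 1 ->
     Ut y = k * radial_laplacian U y - c * d) :
  RInt (fun y => 2 * U y * Ut y * y ^ 2) 0 1 =
  - 2 * k * RInt (fun y => Uy y ^ 2 * y ^ 2) 0 1 - 2 * c * d * RInt (fun y => U y * y ^ 2) 0 1.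
Proof.
assert (HDU : forall s, Derive U s = Uy s) by (intros; apply is_derive_unique; auto).
assert (Hcu : forall y, continuous U y) by (intros; eapply cR_der; apply HU).
assert (Hcuy : forall y, continuous Uy y) by (intros; eapply cR_der; apply HUy).
assert (HD2 : forall y, is_derive (fun s => s ^ 2 * Uy s) y (2 * y * Uy y + y ^ 2 * Uyy y)).
{ intros y. assert (E : ex_derive Uy y) by (eexists; apply HUy).
  auto_derive. tauto. change (Derive (fun x => Uy x) y) with (Derive Uy y).
  rewrite (is_derive_unique _ _ _ (HUy y)). ring. }
set (G := fun y => y ^ 2 * (Ut y + c * d) / k).
assert (HG : forall y, 0 <= y <= 1 -> is_derive (fun s => s ^ 2 * Uy s) y (G y)).
{ intros y Hy. apply (is_derive_eq _ _ _ _ (HD2 y)).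
  destruct (Req_dec y 0) as [->|Hy0].
  - unfold G. req. field. auto.
  - unfold G. rewrite (Hpde y) by lra. unfold radial_laplacian.
    rewrite (Derive_ext _ (fun s => s ^ 2 * Uy s)) by (intros; now rewrite HDU).
    replace (Derive (fun s : R => s ^ 2 * Uy s) y) with (2*y*Uy y + y^2*Uyy y) by (symmetry; apply is_derive_unique; apply HD2).
    req. field. auto. }
set (df := fun y => Uy y * (y ^ 2 * Uy y) + U y * G y).
assert (HI : is_RInt df 0 1 (minus (U 1 * (1 ^ 2 * Uy 1)) (U 0 * (0 ^ 2 * Uy 0)))).
{ apply (is_RInt_derive (fun y => U y * (y ^ 2 * Uy y)) df).
  - intros y Hy. rewrite Rmin_left, Rmax_right in Hy by lra.
    unfold df. apply (is_derive_mult U (fun y => y ^ 2 * Uy y)). auto. auto. 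
    intros; apply Rmult_comm.
  - intros y _. unfold df, G. 
    apply cR_plus. apply cR_mult; auto. apply cR_mult; auto. apply cR_sq, cR_id.
    apply cR_mult; auto. 
    apply continuous_ext with (f := fun y => (y ^ 2 * (Ut y + c * d)) * / k).
    intros; reflexivity.
    apply cR_mult; [| apply cR_const]. apply cR_mult. apply cR_sq, cR_id.
    apply cR_plus; auto. apply cR_const. }
assert (HA : ex_RInt (fun y => Uy y ^ 2 * y ^ 2) 0 1).
{ apply (@ex_RInt_continuous R_CompleteNormedModule). intros y _.
  apply cR_mult. apply cR_sq; auto. apply cR_sq, cR_id. }
assert (HB : ex_RInt (fun y => U y * y ^ 2) 0 1).
{ apply (@ex_RInt_continuous R_CompleteNormedModule). intros y _.
  apply cR_mult. auto. apply cR_sq, cR_id. }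
assert (HC : ex_RInt (fun y => U y * Ut y * y ^ 2) 0 1).
{ apply (@ex_RInt_continuous R_CompleteNormedModule). intros y _.
  apply cR_mult. apply cR_mult; auto. apply cR_sq, cR_id. }
set (A := RInt (fun y => Uy y ^ 2 * y ^ 2) 0 1).
set (B := RInt (fun y => U y * y ^ 2) 0 1).
set (C := RInt (fun y => U y * Ut y * y ^ 2) 0 1).
assert (HI2 : is_RInt df 0 1 (A + / k * C + (c * d / k) * B)).
{ apply (is_RInt_ext (fun y => (Uy y ^ 2 * y ^ 2 + / k * (U y * Ut y * y ^ 2)) + (c * d / k) * (U y * y ^ 2))).
  intros y _. unfold df, G. req. field. auto.
  unfold A, B, C. apply (@is_RInt_plus R_NormedModule). apply (@is_RInt_plus R_NormedModule).
  apply (@RInt_correct R_CompleteNormedModule); auto.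
  apply (@is_RInt_scal R_NormedModule). apply (@RInt_correct R_CompleteNormedModule); auto.
  apply (@is_RInt_scal R_NormedModule). apply (@RInt_correct R_CompleteNormedModule); auto. }
assert (E : A + / k * C + (c * d / k) * B = 0).
{ rewrite <- (is_RInt_unique _ _ _ _ HI2). rewrite (is_RInt_unique _ _ _ _ HI).
  rewrite Hbc. unfold minus, plus, opp; simpl. ring. }
replace (RInt (fun y => 2 * U y * Ut y * y ^ 2) 0 1) with (2 * C).
- fold A B.
  assert (E2 : C = - k * A - c * d * B).
  { replace C with (k * (/ k * C)) by (req; field; auto).
    replace (/ k * C) with (- A - (c * d / k) * B) by (req; lra). req; field. auto. }
  req. rewrite E2. ring.
- unfold C. rewrite <- (RInt_scal (V := R_CompleteNormedModule)). apply RInt_ext. intros; unfold scal; simpl. unfold mult; simpl. ring.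
exact HC.
Qed.
Theorem proposition3p4
  (kappa gamma cv Rg cp Tinf pinf sigma mul rhol rhos Rs : R)
  (Hkappa : 0 < kappa) (Hgamma : 1 < gamma) (Hcv : 0 < cv) (HRg : 0 < Rg)
  (Hcp1 : cp = gamma * cv) (Hcp2 : cp = cv + Rg)
  (HTinf : 0 < Tinf) (Hpinf : 0 < pinf) (Hsigma : 0 < sigma)
  (Hmul : 0 <= mul) (Hrhol : 0 < rhol) (Hrhos : 0 < rhos) (HRs : 0 < Rs)
  (Heq : Rg * Tinf * rhos = pinf + 2 * sigma / Rs)
  (ta tb : R)
  (u uy uyy ut : R -> R -> R)   (* u y t, and its partial derivatives *)
  (Rr dRr ddRr z dz : R -> R)   (* script R, its derivatives, z, z' *)
  (* regularity of u *)
  (Hu_y : forall y t, ta < t < tb -> is_derive (fun s => u s t) y (uy y t))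
  (Hu_yy : forall y t, ta < t < tb -> is_derive (fun s => uy s t) y (uyy y t))
  (Hu_t : forall y t, ta < t < tb -> is_derive (fun s => u y s) t (ut y t))
  (Hu_cont : forall y t, ta < t < tb ->
     continuous (fun p : R * R => u (fst p) (snd p)) (y, t))
  (Huy_cont : forall y t, ta < t < tb ->
     continuous (fun p : R * R => uy (fst p) (snd p)) (y, t))
  (Hut_cont : forall y t, ta < t < tb ->
     continuous (fun p : R * R => ut (fst p) (snd p)) (y, t))
  (* regularity of script R and z *)
  (HR1 : forall t, ta < t < tb -> is_derive Rr t (dRr t))
  (HR2 : forall t, ta < t < tb -> is_derive dRr t (ddRr t))
  (Hz1 : forall t, ta < t < tb -> is_derive z t (dz t))
  (* the linearized system *)
  (Hpde : forall y t, 0 < y <= 1 -> ta < t < tb ->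
     ut y t = kappa / (cp * rhos * Rs ^ 2) * radial_laplacian (fun s => u s t) y
              - (1 - 1 / gamma) * dz t)
  (Hbc : forall t, ta < t < tb -> u 1 t = 0)
  (Hz : forall t, ta < t < tb ->
     z t = 1 / (Rg * Tinf) *
           (- (2 * sigma / Rs ^ 2) * Rr t + 4 * mul / Rs * dRr t + rhol * Rs * ddRr t))
  (Hmass : forall t, ta < t < tb ->
     ball_int (fun y => u y t) = - (4 * PI / 3) * z t - 4 * PI * (rhos / Rs) * Rr t) :
  forall t, ta < t < tb ->
    is_derive
      (fun s => - 4 * PI * sigma * Rr s ^ 2
                - 4 * PI * Rg * Tinf * Rs ^ 2 * Rr s * z s
                - 2 * PI * Rg * Tinf * Rs ^ 3 / (3 * rhos) * z s ^ 2
                + cv * gamma * Tinf * Rs ^ 3 / (2 * rhos) * ball_int (fun y => u y s ^ 2)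
                + 2 * PI * rhol * Rs ^ 3 * dRr s ^ 2)
      t
      (- (kappa * Tinf / rhos ^ 2) * Rs * ball_int (radial_grad_sq (fun s => u s t))
       - 16 * PI * mul * Rs * dRr t ^ 2).
Proof.
intros t Ht.
set (k := kappa / (cp * rhos * Rs ^ 2)).
assert (Hcp : 0 < cp) by (rewrite Hcp2; lra).
assert (Hk : k <> 0).
{ unfold k. apply Rgt_not_eq. apply Rdiv_lt_0_compat; auto.
  apply Rmult_lt_0_compat. apply Rmult_lt_0_compat; auto. apply pow_lt; auto. }
pose proof (step1 ta tb u uy ut Hu_y Hu_t Hu_cont Hut_cont t Ht) as H1.
pose proof (step2 (fun y => u y t) (fun y => uy y t) (fun y => uyy y t) (fun y => ut y t)
  k (1 - 1 / gamma) (dz t) Hk (fun y => Hu_y y t Ht) (fun y => Hu_yy y t Ht)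
  (fun y => cont_slice ut y t (Hut_cont y t Ht)) (Hbc t Ht) (fun y Hy => Hpde y t Hy Ht)) as H2.
assert (Hgrad : ball_int (radial_grad_sq (fun s => u s t)) = 4 * PI * RInt (fun y => uy y t ^ 2 * y ^ 2) 0 1).
{ unfold ball_int, radial_grad_sq. f_equal. apply RInt_ext. intros y _.
  replace (Derive (fun s : R => u s t) y) with (uy y t) by (symmetry; apply is_derive_unique; apply Hu_y; auto). reflexivity. }
pose proof (Hmass t Ht) as HM. unfold ball_int in HM.
pose proof (Hz t Ht) as HZ.
rewrite Hgrad.
set (dI := 4 * PI * RInt (fun y => 2 * u y t * ut y t * y ^ 2) 0 1) in *.
pose (I := fun s => ball_int (fun y => u y s ^ 2)).
apply (is_derive_ext (fun s => - 4 * PI * sigma * Rr s ^ 2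
                - 4 * PI * Rg * Tinf * Rs ^ 2 * Rr s * z s
                - 2 * PI * Rg * Tinf * Rs ^ 3 / (3 * rhos) * z s ^ 2
                + cv * gamma * Tinf * Rs ^ 3 / (2 * rhos) * I s
                + 2 * PI * rhol * Rs ^ 3 * dRr s ^ 2)).
{ intros; reflexivity. }
change (is_derive I t dI) in H1.
clearbody I.
assert (ER : ex_derive Rr t) by (eexists; apply HR1; auto).
assert (EdR : ex_derive dRr t) by (eexists; apply HR2; auto).
assert (Ez : ex_derive z t) by (eexists; apply Hz1; auto).
assert (EI : ex_derive I t) by (eexists; apply H1).
auto_derive. tauto.
change (Derive (fun x => Rr x) t) with (Derive Rr t).
change (Derive (fun x => dRr x) t) with (Derive dRr t).
change (Derive (fun x => z x) t) with (Derive z t).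
change (Derive (fun x => I x) t) with (Derive I t).
rewrite (is_derive_unique _ _ _ (HR1 t Ht)), (is_derive_unique _ _ _ (HR2 t Ht)),
  (is_derive_unique _ _ _ (Hz1 t Ht)), (is_derive_unique _ _ _ H1).
cbv beta in H2. unfold dI. rewrite H2.
set (A := RInt (fun y => uy y t ^ 2 * y ^ 2) 0 1) in *.
set (B := RInt (fun y => u y t * y ^ 2) 0 1) in *.
pose proof PI_RGT_0 as HPI.
assert (HB : B = - (1 / 3) * z t - (rhos / Rs) * Rr t).
{ apply (Rmult_eq_reg_l (4 * PI)); [| lra]. rewrite HM. field. lra. }
assert (Hdd : ddRr t = (Rg * Tinf * z t + 2 * sigma / Rs ^ 2 * Rr t - 4 * mul / Rs * dRr t) / (rhol * Rs)).
{ rewrite HZ. field. repeat split; lra. }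
rewrite HB, Hdd. unfold k.
assert (HRg' : Rg = gamma * cv - cv) by lra.
rewrite HRg'. subst cp.
assert (gamma * cv <> 0) by nra.
field. repeat split; lra.
Qed.
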